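(* Let $(X,d)$ be a non-empty complete metric space and let $\alpha_{1},\alpha_{2}:X\to X$ be injective contractions with ratios $c_{1},c_{2}\in\,]0,1[$, i.e. $d(\alpha_{i}(x),\alpha_{i}(y))\leq c_{i}\,d(x,y)$ for all $x,y\in X$. Suppose that $\alpha_{1}$ and $\alpha_{2}$ have distinct fixed points and that $c_{1}+c_{2}\leq 1$. Then the semigroup generated by $\alpha_{1}$ and $\alpha_{2}$ under composition is free of rank $2$.
   Context: By Banach's fixed point theorem each contraction has a unique fixed point. A semigroup generated by two elements is free of rank $2$ if distinct finite nonempty words in the two generators give distinct elements. *)

(* Defs.v *)
From Stdlib Require Import Reals List.
Open Scope R_scope.

Definition is_metric {X : Type} (d : X -> X -> R) : Prop :=
  (forall x y, 0 <= d x y) /\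
  (forall x y, d x y = 0 <-> x = y) /\
  (forall x y, d x y = d y x) /\
  (forall x y z, d x z <= d x y + d y z).

Definition cauchy_seq {X : Type} (d : X -> X -> R) (u : nat -> X) : Prop :=
  forall eps, 0 < eps -> exists N, forall m n, (N <= m)%nat -> (N <= n)%nat ->
    d (u m) (u n) < eps.

Definition converges_to {X : Type} (d : X -> X -> R) (u : nat -> X) (l : X) : Prop :=
  forall eps, 0 < eps -> exists N, forall n, (N <= n)%nat -> d (u n) l < eps.

Definition complete_metric {X : Type} (d : X -> X -> R) : Prop :=
  forall u : nat -> X, cauchy_seq d u -> exists l, converges_to d u l.

Definition contraction_with {X : Type} (d : X -> X -> R) (c : R) (a : X -> X) : Prop :=
  forall x y, d (a x) (a y) <= c * d x y.

Definition injective_map {X : Type} (f : X -> X) : Prop :=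
  forall x y, f x = f y -> x = y.

(* Evaluation of a word over the alphabet {true, false} in the semigroup
   generated by a1 (letter true) and a2 (letter false) under composition:
   [b1; ...; bn] |-> alpha_b1 o ... o alpha_bn. *)
Fixpoint word_eval {X : Type} (a1 a2 : X -> X) (w : list bool) : X -> X :=
  match w with
  | nil => fun x => x
  | b :: w' => fun x => (if b then a1 else a2) (word_eval a1 a2 w' x)
  end.

Definition free_semigroup2 {X : Type} (a1 a2 : X -> X) : Prop :=
  forall w1 w2 : list bool, w1 <> nil -> w2 <> nil -> w1 <> w2 ->
    word_eval a1 a2 w1 <> word_eval a1 a2 w2.

(* Main.v *)
Require Import Defs.
From Stdlib Require Import Reals List Lra Lia Psatz.
Open Scope R_scope.

Lemma div_lt_aux (a b c : R) : 0 < c -> a < b * c -> a / c < b.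
Proof.
  intros Hc H. apply Rmult_lt_reg_r with c; auto.
  unfold Rdiv. rewrite Rmult_assoc, Rinv_l by lra. lra.
Qed.

Lemma banach (X : Type) (d : X -> X -> R) (hm : is_metric d)
  (hc : complete_metric d) (T : X -> X) (k : R) (hk : 0 <= k < 1)
  (hT : forall x y, d (T x) (T y) <= k * d x y) (x0 : X) :
  exists z, T z = z.
Proof.
  destruct hm as (hpos & heq & hsym & htri).
  set (x := fun n => Nat.iter n T x0).
  set (d0 := d x0 (T x0)).
  assert (Hd0 : 0 <= d0) by apply hpos.
  assert (H1 : forall n, d (x n) (x (S n)) <= k ^ n * d0).
  { induction n.
    - simpl. unfold x, d0; simpl. lra.
    - change (x (S n)) with (T (x n)). change (x (S (S n))) with (T (x (S n))).
      apply Rle_trans with (k * d (x n) (x (S n))); [apply hT|].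
      simpl. rewrite Rmult_assoc. apply Rmult_le_compat_l; [lra|exact IHn]. }
  assert (H2 : forall n p, d (x n) (x (n + p)%nat) <= d0 * (k ^ n - k ^ (n + p)) / (1 - k)).
  { intros n p; induction p.
    - rewrite Nat.add_0_r. assert (d (x n) (x n) = 0) by (apply heq; reflexivity).
      rewrite H. replace (k ^ n - k ^ n) with 0 by ring. unfold Rdiv. rewrite Rmult_0_r, Rmult_0_l. lra.
    - apply Rle_trans with (d (x n) (x (n + p)%nat) + d (x (n + p)%nat) (x (n + S p)%nat)); [apply htri|].
      rewrite Nat.add_succ_r.
      pose proof (H1 (n + p)%nat).
      replace (d0 * (k ^ n - k ^ S (n + p)) / (1 - k)) with
        (d0 * (k ^ n - k ^ (n + p)) / (1 - k) + k ^ (n + p) * d0) by (simpl; field; lra).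
      lra. }
  assert (Hc : cauchy_seq d x).
  { intros eps heps.
    assert (Hy : 0 < eps * (1 - k) / (d0 + 1)).
    { apply Rdiv_lt_0_compat; nra. }
    destruct (pow_lt_1_zero k ltac:(rewrite Rabs_pos_eq; lra) _ Hy) as [N HN].
    exists N.
    assert (key : forall m p, (N <= m)%nat -> d (x m) (x (m + p)%nat) < eps).
    { intros m p hm.
      specialize (HN m hm). rewrite Rabs_pos_eq in HN by (apply pow_le; lra).
      pose proof (pow_le k (m + p) (proj1 hk)).
      pose proof (pow_le k m (proj1 hk)).
      eapply Rle_lt_trans; [apply H2|].
      apply div_lt_aux; [lra|].
      assert (k ^ m * (d0 + 1) < eps * (1 - k)).
      { apply Rmult_lt_reg_r with (/ (d0 + 1)). apply Rinv_0_lt_compat; lra.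
        rewrite Rmult_assoc, Rinv_r by lra. lra. }
      nra. }
    intros m n hm hn.
    destruct (Nat.le_ge_cases m n) as [hmn | hmn].
    - replace n with (m + (n - m))%nat by lia. apply key; auto.
    - rewrite hsym. replace m with (n + (m - n))%nat by lia. apply key; auto. }
  destruct (hc x Hc) as [l Hl].
  exists l. apply heq.
  destruct (Rle_lt_or_eq_dec 0 (d (T l) l) (hpos _ _)) as [Hlt|Heq]; [|auto].
  exfalso.
  destruct (Hl (d (T l) l / 2) ltac:(lra)) as [N HN].
  pose proof (HN N (le_n N)). pose proof (HN (S N) (le_S _ _ (le_n N))).
  pose proof (htri (T l) (x (S N)) l).
  change (x (S N)) with (T (x N)) in *.
  pose proof (hT l (x N)). pose proof (hsym l (x N)).
  pose proof (hpos (x N) l).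
  nra.
Qed.

Fixpoint suffixes {A : Type} (l : list A) : list (list A) :=
  match l with nil => nil :: nil | _ :: t => l :: suffixes t end.

Lemma suffixes_self {A} (l : list A) : In l (suffixes l).
Proof. destruct l; simpl; auto. Qed.

Lemma suffixes_tail {A} (l : list A) x w : In (x :: w) (suffixes l) -> In w (suffixes l).
Proof.
  induction l as [|a t IH]; simpl; intros H.
  - destruct H as [H|H]; [discriminate|contradiction].
  - destruct H as [H|H].
    + injection H as <- <-. right. apply suffixes_self.
    + right. auto.
Qed.

Lemma suffixes_len {A} (l : list A) w : In w (suffixes l) -> (length w <= length l)%nat.
Proof.
  induction l as [|a t IH]; simpl; intros H.
  - destruct H as [<-|[]]. simpl; lia.
  - destruct H as [<-|H]; simpl; [lia|]. specialize (IH H). lia.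
Qed.

Lemma list_bound (X : Type) (d : X -> X -> R) (base : X) (L : list X) :
  exists R0, 0 <= R0 /\ forall x, In x L -> d x base <= R0.
Proof.
  induction L as [|a t [R0 [HR IH]]].
  - exists 0. split; [lra|]. intros x [].
  - exists (Rmax (d a base) R0). split.
    + apply Rle_trans with R0; auto. apply Rmax_r.
    + intros x [<-|H]. apply Rmax_l. apply Rle_trans with R0; auto. apply Rmax_r.
Qed.

Lemma eval_nonexp (X : Type) (d : X -> X -> R) (hm : is_metric d)
  (a1 a2 : X -> X) (c1 c2 : R) (hc1 : 0 < c1 < 1) (hc2 : 0 < c2 < 1)
  (hcon1 : contraction_with d c1 a1) (hcon2 : contraction_with d c2 a2) :
  forall w x y, d (word_eval a1 a2 w x) (word_eval a1 a2 w y) <= d x y.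
Proof.
  destruct hm as (hpos & _ & _ & _).
  induction w as [|b w IH]; intros x y; simpl; [lra|].
  specialize (IH x y).
  destruct b.
  - pose proof (hcon1 (word_eval a1 a2 w x) (word_eval a1 a2 w y)).
    pose proof (hpos (word_eval a1 a2 w x) (word_eval a1 a2 w y)). nra.
  - pose proof (hcon2 (word_eval a1 a2 w x) (word_eval a1 a2 w y)).
    pose proof (hpos (word_eval a1 a2 w x) (word_eval a1 a2 w y)). nra.
Qed.

Lemma fix_unique (X : Type) (d : X -> X -> R) (hm : is_metric d) (a : X -> X) (c : R)
  (hc : 0 < c < 1) (hcon : contraction_with d c a) p q :
  a p = p -> a q = q -> p = q.
Proof.
  intros Hp Hq. destruct hm as (hpos & heq & _ & _).
  apply heq. pose proof (hcon p q). rewrite Hp, Hq in H. pose proof (hpos p q). nra.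
Qed.
Lemma suffixes_nil {A} (l : list A) : In nil (suffixes l).
Proof. induction l; simpl; auto. Qed.

Fixpoint beta (c m : R) (k : nat) : R :=
  match k with O => c | S k => Rmax c (1 - m * (1 - beta c m k)) end.

Lemma beta_bounds c m k : 0 < m <= 1 -> 0 <= c < 1 -> c <= beta c m k < 1.
Proof.
  intros Hm Hc. induction k; simpl; [lra|]. split; [apply Rmax_l|].
  apply Rmax_lub_lt; nra.
Qed.

Lemma zero_lemma t th K0 : 0 <= t -> 0 <= th < 1 -> 0 <= K0 ->
  (forall n, t <= th ^ n * K0) -> t = 0.
Proof.
  intros Ht Hth HK H.
  destruct (Rle_lt_or_eq_dec 0 t Ht) as [Hlt|]; [|auto]. exfalso.
  assert (Hy : 0 < t / (K0 + 1)) by (apply Rdiv_lt_0_compat; lra).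
  destruct (pow_lt_1_zero th ltac:(rewrite Rabs_pos_eq; lra) _ Hy) as [N HN].
  specialize (HN N (le_n N)). rewrite Rabs_pos_eq in HN by (apply pow_le; lra).
  specialize (H N). pose proof (pow_le th N (proj1 Hth)).
  assert (th ^ N * (K0 + 1) < t).
  { apply Rmult_lt_reg_r with (/ (K0 + 1)). apply Rinv_0_lt_compat; lra.
    rewrite Rmult_assoc, Rinv_r by lra. lra. }
  nra.
Qed.

Lemma mixed (X : Type) (d : X -> X -> R) (hm : is_metric d) (hc : complete_metric d)
  (a1 a2 : X -> X) (c1 c2 : R) (hc1 : 0 < c1 < 1) (hc2 : 0 < c2 < 1)
  (hcon1 : contraction_with d c1 a1) (hcon2 : contraction_with d c2 a2)
  (p1 p2 : X) (fx1 : a1 p1 = p1) (fx2 : a2 p2 = p2) (hneq : p1 <> p2)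
  (hsum : c1 + c2 <= 1) (f g : list bool)
  (H : forall z, a1 (word_eval a1 a2 f z) = a2 (word_eval a1 a2 g z)) : False.
Proof.
  pose proof (eval_nonexp X d hm a1 a2 c1 c2 hc1 hc2 hcon1 hcon2) as NE.
  destruct (banach X d hm hc (fun z => a1 (word_eval a1 a2 f z)) c1 ltac:(lra)
     ltac:(intros x y; eapply Rle_trans; [apply hcon1|];
           apply Rmult_le_compat_l; [lra|apply NE]) p1) as [q Hq].
  set (A := word_eval a1 a2 f q) in *. set (B := word_eval a1 a2 g q).
  assert (HA : a1 A = q) by exact Hq.
  assert (HB : a2 B = q) by (unfold B; rewrite <- H; exact Hq).
  pose proof hm as (hpos & heq & hsym & htri).
  set (Sx := fun z => exists w, (In w (suffixes f) \/ In w (suffixes g)) /\ z = word_eval a1 a2 w q).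
  assert (SA : Sx A) by (exists f; split; [left; apply suffixes_self | reflexivity]).
  assert (SB : Sx B) by (exists g; split; [right; apply suffixes_self | reflexivity]).
  assert (dec : forall y, Sx y -> exists (bb : bool) Y, Sx Y /\ y = (if bb then a1 else a2) Y).
  { intros y [w [Hw ->]]. destruct w as [|b w].
    - exists true, A. split; [exact SA | symmetry; exact HA].
    - exists b, (word_eval a1 a2 w q). split; [|reflexivity].
      exists w; split; [|reflexivity].
      destruct Hw; [left|right]; eapply suffixes_tail; eauto. }
  destruct (list_bound X d q (map (fun w => word_eval a1 a2 w q) (suffixes f ++ suffixes g)))
    as [R0 [HR0 HRb]].
  assert (Mb : forall x y, Sx x -> Sx y -> d x y <= 2 * R0).
  { intros x y [w [Hw ->]] [w' [Hw' ->]].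
    eapply Rle_trans; [apply (htri _ q)|]. rewrite (hsym q).
    assert (d (word_eval a1 a2 w q) q <= R0).
    { apply HRb. apply (in_map (fun w0 => word_eval a1 a2 w0 q)). apply in_or_app. destruct Hw; auto. }
    assert (d (word_eval a1 a2 w' q) q <= R0).
    { apply HRb. apply (in_map (fun w0 => word_eval a1 a2 w0 q)). apply in_or_app. destruct Hw'; auto. }
    lra. }
  set (c := Rmax c1 c2). set (m := Rmin c1 c2).
  assert (Hc1c : c1 <= c) by apply Rmax_l. assert (Hc2c : c2 <= c) by apply Rmax_r.
  assert (Hmc1 : m <= c1) by apply Rmin_l. assert (Hmc2 : m <= c2) by apply Rmin_r.
  assert (Hm : 0 < m) by (apply Rmin_glb_lt; lra).
  assert (Hc : c < 1) by (apply Rmax_lub_lt; lra).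
  set (K := (length f + length g)%nat).
  assert (step : forall M, 0 <= M -> (forall x y, Sx x -> Sx y -> d x y <= M) ->
            forall x y, Sx x -> Sx y -> d x y <= beta c m K * M).
  { intros M HM HMb.
    assert (base : forall y, Sx y -> d q y <= c * M).
    { intros y Hy. destruct (dec y Hy) as [bb [Y [HY ->]]]. destruct bb.
      - apply Rle_trans with (d (a1 A) (a1 Y)); [rewrite HA; lra|].
        pose proof (hcon1 A Y). pose proof (HMb A Y SA HY). pose proof (hpos A Y).
        apply Rle_trans with (c1 * M); [nra|]. apply Rmult_le_compat_r; lra.
      - apply Rle_trans with (d (a2 B) (a2 Y)); [rewrite HB; lra|].
        pose proof (hcon2 B Y). pose proof (HMb B Y SB HY). pose proof (hpos B Y).
        apply Rle_trans with (c2 * M); [nra|]. apply Rmult_le_compat_r; lra. }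
    assert (claim : forall k w, (In w (suffixes f) \/ In w (suffixes g)) -> (length w <= k)%nat ->
               forall y, Sx y -> d (word_eval a1 a2 w q) y <= beta c m k * M).
    { induction k; intros w Hw Hl y Hy.
      - destruct w; [|simpl in Hl; lia]. simpl. apply base; auto.
      - assert (bk : c <= beta c m k < 1) by (apply beta_bounds; lra).
        assert (bSk1 : c <= beta c m (S k)) by (simpl; apply Rmax_l).
        assert (bSk2 : 1 - m * (1 - beta c m k) <= beta c m (S k)) by (simpl; apply Rmax_r).
        destruct w as [|b w].
        + simpl word_eval. eapply Rle_trans; [apply base; auto|].
          apply Rmult_le_compat_r; auto.
        + assert (Hw' : In w (suffixes f) \/ In w (suffixes g))
            by (destruct Hw; [left|right]; eapply suffixes_tail; eauto).
          assert (Hl' : (length w <= k)%nat) by (simpl in Hl; lia).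
          pose proof (IHk w Hw' Hl') as IH.
          set (Z := word_eval a1 a2 w q) in *.
          assert (SZ : Sx Z) by (exists w; auto).
          change (word_eval a1 a2 (b :: w) q) with ((if b then a1 else a2) Z).
          destruct (dec y Hy) as [bb [Y [HY ->]]].
          set (be := beta c m k) in *.
          destruct b, bb.
          * pose proof (hcon1 Z Y). pose proof (HMb Z Y SZ HY). pose proof (hpos Z Y).
            apply Rle_trans with (c1 * M); [nra|]. apply Rmult_le_compat_r; lra.
          * pose proof (htri (a1 Z) q (a2 Y)).
            pose proof (hcon1 Z A). rewrite HA in H1.
            pose proof (hcon2 B Y). rewrite HB in H2.
            pose proof (IH A SA). pose proof (HMb B Y SB HY).
            assert (c1 * d Z A <= c1 * (be * M)) by (apply Rmult_le_compat_l; lra).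
            assert (c2 * d B Y <= c2 * M) by (apply Rmult_le_compat_l; lra).
            assert (0 <= (c1 - m) * ((1 - be) * M)) by (apply Rmult_le_pos; [lra| apply Rmult_le_pos; lra]).
            apply Rle_trans with ((1 - m * (1 - be)) * M); [|apply Rmult_le_compat_r; lra].
            nra.
          * pose proof (htri (a2 Z) q (a1 Y)).
            pose proof (hcon2 Z B). rewrite HB in H1.
            pose proof (hcon1 A Y). rewrite HA in H2.
            pose proof (IH B SB). pose proof (HMb A Y SA HY).
            assert (c2 * d Z B <= c2 * (be * M)) by (apply Rmult_le_compat_l; lra).
            assert (c1 * d A Y <= c1 * M) by (apply Rmult_le_compat_l; lra).
            assert (0 <= (c2 - m) * ((1 - be) * M)) by (apply Rmult_le_pos; [lra| apply Rmult_le_pos; lra]).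
            apply Rle_trans with ((1 - m * (1 - be)) * M); [|apply Rmult_le_compat_r; lra].
            nra.
          * pose proof (hcon2 Z Y). pose proof (HMb Z Y SZ HY). pose proof (hpos Z Y).
            apply Rle_trans with (c2 * M); [nra|]. apply Rmult_le_compat_r; lra. }
    intros x y [w [Hw ->]] Hy. apply claim; auto.
    unfold K. destruct Hw as [Hw|Hw]; apply suffixes_len in Hw; lia. }
  assert (bK : c <= beta c m K < 1) by (apply beta_bounds; lra).
  assert (iter : forall n x y, Sx x -> Sx y -> d x y <= (beta c m K) ^ n * (2 * R0)).
  { induction n; intros x y Hx Hy.
    - simpl. rewrite Rmult_1_l. apply Mb; auto.
    - simpl. rewrite Rmult_assoc.
      apply step; [apply Rmult_le_pos; [apply pow_le; lra | lra] | intros; apply IHn; auto | exact Hx | exact Hy]. }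
  assert (Sq : Sx q) by (exists nil; split; [left; apply suffixes_nil | reflexivity]).
  assert (EA : A = q).
  { apply heq. apply (zero_lemma _ (beta c m K) (2 * R0)); [apply hpos | lra | lra | intros n; apply iter; auto]. }
  assert (EB : B = q).
  { apply heq. apply (zero_lemma _ (beta c m K) (2 * R0)); [apply hpos | lra | lra | intros n; apply iter; auto]. }
  rewrite EA in HA. rewrite EB in HB.
  apply hneq.
  transitivity q.
  - apply (fix_unique X d hm a1 c1 hc1 hcon1); auto.
  - symmetry. apply (fix_unique X d hm a2 c2 hc2 hcon2); auto.
Qed.

Theorem proposition2p1 (X : Type) (d : X -> X -> R)
  (hmetric : is_metric d) (hcomplete : complete_metric d) (hne : inhabited X)
  (alpha1 alpha2 : X -> X) (c1 c2 : R)
  (hc1 : 0 < c1 < 1) (hc2 : 0 < c2 < 1)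
  (hinj1 : injective_map alpha1) (hinj2 : injective_map alpha2)
  (hcon1 : contraction_with d c1 alpha1) (hcon2 : contraction_with d c2 alpha2)
  (hfix : exists p1 p2 : X, alpha1 p1 = p1 /\ alpha2 p2 = p2 /\ p1 <> p2)
  (hsum : c1 + c2 <= 1) :
  free_semigroup2 alpha1 alpha2.
Proof.
  destruct hfix as [p1 [p2 [fx1 [fx2 hneq]]]].
  pose proof (eval_nonexp X d hmetric alpha1 alpha2 c1 c2 hc1 hc2 hcon1 hcon2) as NE.
  pose proof hmetric as (hpos & heq & hsym & htri).
  assert (nonid : forall b w, (forall z, word_eval alpha1 alpha2 (b :: w) z = z) -> False).
  { intros b w Hid. apply hneq. apply heq.
    pose proof (NE w p1 p2). pose proof (hpos p1 p2).
    pose proof (Hid p1) as E1. pose proof (Hid p2) as E2. simpl in E1, E2.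
    destruct b.
    - pose proof (hcon1 (word_eval alpha1 alpha2 w p1) (word_eval alpha1 alpha2 w p2)).
      rewrite E1, E2 in H1. nra.
    - pose proof (hcon2 (word_eval alpha1 alpha2 w p1) (word_eval alpha1 alpha2 w p2)).
      rewrite E1, E2 in H1. nra. }
  assert (weq : forall w1 w2, (forall z, word_eval alpha1 alpha2 w1 z = word_eval alpha1 alpha2 w2 z) -> w1 = w2).
  { induction w1 as [|x w1 IH]; intros [|y w2] Hz.
    - reflexivity.
    - exfalso. apply (nonid y w2). intro z. symmetry. apply Hz.
    - exfalso. apply (nonid x w1). intro z. apply Hz.
    - simpl in Hz. destruct x, y.
      + f_equal. apply IH. intro z. apply hinj1. apply Hz.
      + exfalso. apply (mixed X d hmetric hcomplete alpha1 alpha2 c1 c2 hc1 hc2 hcon1 hcon2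
                          p1 p2 fx1 fx2 hneq hsum w1 w2). exact Hz.
      + exfalso. apply (mixed X d hmetric hcomplete alpha1 alpha2 c1 c2 hc1 hc2 hcon1 hcon2
                          p1 p2 fx1 fx2 hneq hsum w2 w1). intro z. symmetry. apply Hz.
      + f_equal. apply IH. intro z. apply hinj2. apply Hz. }
  intros w1 w2 _ _ hne12 Heq. apply hne12. apply weq. intro z. rewrite Heq. reflexivity.
Qed.
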